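(* Let $\mathbb{X}\in\{\mathbb{H},\mathbb{E},\mathbb{S}\}$, $d\ge 2$, let $p,q,x\in\mathbb{X}^d$, let $pq$ be a shortest geodesic segment from $p$ to $q$, and let $y$ be the point of $pq$ closest to $x$. Let $\varepsilon\in(0,1]$. If $|xy|\le\sqrt{\varepsilon}\,\min\{|py|,|qy|\}$, then (i) if $\mathbb{X}\in\{\mathbb{E},\mathbb{S}\}$: $|px|+|xq|\le(1+\varepsilon)|pq|$; (ii) if $\mathbb{X}=\mathbb{H}$ and $|pq|\le\Delta$ for some $\Delta>0$: $|px|+|xq|\le(1+e^{\Delta}\varepsilon)|pq|$.
   Context: $\mathbb{E}^d$ is Euclidean $d$-space, $\mathbb{S}^d$ the unit sphere in $\mathbb{R}^{d+1}$ with geodesic (great-circle) metric, $\mathbb{H}^d$ hyperbolic $d$-space of curvature $-1$; $|ab|$ denotes the distance between $a$ and $b$ in the respective space. *)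

(* Defs.v *)
From mathcomp Require Import all_boot all_order all_algebra.
From mathcomp Require Import all_classical all_reals all_analysis.
Set Implicit Arguments. Unset Strict Implicit. Unset Printing Implicit Defensive.
Import Order.TTheory GRing.Theory Num.Theory.
Local Open Scope ring_scope.

Section Spaces.
Variable R : realType.

Definition dotE (n : nat) (u v : 'rV[R]_n) : R := \sum_(i < n) u 0 i * v 0 i.

Definition ptE (d : nat) (u : 'rV[R]_d) : Prop := True.
Definition distE (d : nat) (u v : 'rV[R]_d) : R := Num.sqrt (dotE (u - v) (u - v)).

Definition ptS (d : nat) (u : 'rV[R]_d.+1) : Prop := dotE u u = 1.
Definition distS (d : nat) (u v : 'rV[R]_d.+1) : R := acos (dotE u v).

(* Hyperbolic space H^d (curvature -1), hyperboloid model in R^(1,d). *)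
Definition minkowski (d : nat) (u v : 'rV[R]_d.+1) : R :=
  - (u 0 ord0 * v 0 ord0) + \sum_(i < d) u 0 (lift ord0 i) * v 0 (lift ord0 i).
Definition ptH (d : nat) (u : 'rV[R]_d.+1) : Prop :=
  minkowski u u = -1 /\ 0 < u 0 ord0.
Definition arcosh (t : R) : R := ln (t + Num.sqrt (t ^+ 2 - 1)).
Definition distH (d : nat) (u v : 'rV[R]_d.+1) : R := arcosh (- minkowski u v).

Definition shortest_segment (T : Type) (P : T -> Prop) (dist : T -> T -> R)
    (p q : T) (g : R -> T) : Prop :=
  g 0 = p /\ g (dist p q) = q /\
  (forall t, 0 <= t <= dist p q -> P (g t)) /\
  (forall s t, 0 <= s <= dist p q -> 0 <= t <= dist p q ->
     dist (g s) (g t) = `|s - t|).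

Definition closest_on_segment (T : Type) (dist : T -> T -> R)
    (p q : T) (g : R -> T) (x y : T) : Prop :=
  exists t0, 0 <= t0 <= dist p q /\ y = g t0 /\
    (forall t, 0 <= t <= dist p q -> dist x y <= dist x (g t)).

End Spaces.

(* Main.v *)
Require Import Defs.
From mathcomp Require Import all_boot all_order all_algebra.
From mathcomp Require Import all_classical all_reals all_analysis.
From mathcomp Require Import ring lra.
Import Order.TTheory GRing.Theory Num.Theory numFieldNormedType.Exports.
Local Open Scope ring_scope.
Lemma mono_deriv {R : realType} (f f' : R -> R) (a b : R) :
  (forall x : R, is_derive x 1 f (f' x)) -> (forall x, a <= x <= b -> 0 <= f' x) ->
  a <= b -> f a <= f b.
Proof.
move=> df df0 ab.
have dv : forall x : R, derivable f x 1 by move=> x; exact: ex_derive.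
apply: (@ger0_derive1_ndecr R f a b) => //.
- move=> x /[!in_itv] /= /andP[ax xb].
  by rewrite derive1E (@derive_val _ _ _ _ _ _ _ (df x)); apply: df0; rewrite !ltW.
- by apply: derivable_within_continuous => x _; exact: dv.
Qed.

Lemma sin_le_id {R : realType} (x : R) : 0 <= x -> sin x <= x.
Proof.
move=> x0.
have h : forall y : R, is_derive y 1 (fun z : R => z - sin z) (1 - cos y).
  by move=> y; apply: is_derive_eq.
have := @mono_deriv R _ _ 0 x h _ x0.
rewrite sin0 subr0 subr_ge0; apply => y _; rewrite subr_ge0; exact: cos_le1.
Qed.

Lemma cos_ge_taylor {R : realType} (x : R) : 1 - x ^+ 2 / 2 <= cos x.
Proof.
wlog x0 : x / 0 <= x.
  move=> H; case: (lerP 0 x) => [/H//|x0].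
  by rewrite -cosN -sqrrN; apply: H; rewrite oppr_ge0 ltW.
have h : forall y : R, is_derive y 1 (fun z : R => cos z - 1 + z ^+ 2 / 2) (y - sin y).
  move=> y; apply: is_derive_eq.
  rewrite !scaler0 !add0r subr0 [y%:A]mulr1 [_ *: _]mulrC; lra.
have := @mono_deriv R _ _ 0 x h _ x0.
rewrite cos0 subrr expr0n /= mul0r addr0.
have H1 : forall y, 0 <= y <= x -> 0 <= y - sin y.
  by move=> y /andP[y0 _]; rewrite subr_ge0 sin_le_id.
move/(_ H1) => H2; lra.
Qed.

Lemma sin_ge_xcos {R : realType} (x : R) : 0 <= x <= pi -> x * cos x <= sin x.
Proof.
move=> /andP[x0 xpi].
have h : forall y : R, is_derive y 1 (fun z : R => sin z - z * cos z) (y * sin y).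
  move=> y; apply: is_derive_eq.
  by rewrite [(cos y)%:A]mulr1 [_ *: _]mulrN; lra.
have := @mono_deriv R _ _ 0 x h _ x0.
rewrite sin0 mul0r subr0.
have H1 : forall y, 0 <= y <= x -> 0 <= y * sin y.
  move=> y /andP[y0 yx]; rewrite mulr_ge0// sin_ge0_pi// y0 (le_trans yx)//.
move/(_ H1) => H2; lra.
Qed.

Lemma cos_anti {R : realType} {x y : R} : 0 <= x -> x <= y -> y <= pi -> cos y <= cos x.
Proof.
move=> x0 xy ypi; rewrite leNgt; apply/negP => H.
have := @ltr_cos R y x; rewrite !in_itv /= x0 ypi (le_trans x0 xy) (le_trans xy ypi).
by move=> /(_ isT isT); rewrite H => /esym; rewrite ltNge xy.
Qed.

Lemma sin_ge_half {R : realType} (y : R) : 0 <= y <= pi / 2 -> y / 2 <= sin y.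
Proof.
move=> /andP[y0 ypi].
have pi4 := pihalf_lt2 R.
have pi0 := pi_gt0 R.
case: (lerP (1/2) (cos y)) => cy.
  have := @sin_ge_xcos R y; rewrite y0 /= (le_trans ypi) ?ler_pdivrMr//; last lra.
  move=> /(_ isT) H; nra.
have h : forall z : R, is_derive z 1 (fun z : R => z / 2 - sin z) (1/2 - cos z).
  by move=> z; apply: is_derive_eq; rewrite !scaler0 add0r [_%:A]mulr1; lra.
have := @mono_deriv R _ _ y (pi / 2) h _ ypi.
have H1 : forall z, y <= z <= pi / 2 -> 0 <= 1/2 - cos z.
  move=> z /andP[yz zpi]; rewrite subr_ge0.
  have := @cos_anti R y z y0 yz; lra.
move/(_ H1); rewrite sin_pihalf => H2; lra.
Qed.

Lemma cos_lt {R : realType} {x y : R} : 0 <= x -> x < y -> y <= pi -> cos y < cos x.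
Proof.
move=> x0 xy ypi.
have := @ltr_cos R x y; rewrite !in_itv /= x0 ypi (le_trans x0 (ltW xy)) (le_trans (ltW xy) ypi).
by move=> /(_ isT isT) ->.
Qed.

Lemma sqr_le_of_le_sqrt {R : realType} {h eps a : R} :
  0 <= h -> 0 <= eps -> 0 <= a -> h <= Num.sqrt eps * a -> h ^+ 2 <= eps * a ^+ 2.
Proof.
move=> h0 e0 a0 H.
have : h ^+ 2 <= (Num.sqrt eps * a) ^+ 2 by rewrite ler_pXn2r// ?nnegrE// mulr_ge0// sqrtr_ge0.
by rewrite exprMn sqr_sqrtr.
Qed.

Lemma sph_bound {R : realType} (a h c eps : R) : 0 <= a -> a <= pi -> 0 <= h ->
  h <= Num.sqrt eps * a -> 0 < eps <= 1 -> 0 <= c -> c <= pi ->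
  cos c = cos a * cos h -> c <= (1 + eps) * a.
Proof.
move=> a0 api h0 ha /andP[e0 e1] c0 cpi cc.
have hh := sqr_le_of_le_sqrt h0 (ltW e0) a0 ha.
have pi0 := pi_gt0 R.
have pi2 := pihalf_lt2 R.
have ch1 := cos_le1 h.
case: (lerP (cos a) 0) => ca.
  have cac : cos a <= cos c by rewrite cc; nra.
  have : c <= a.
    rewrite leNgt; apply/negP => ac.
    by have := cos_lt a0 ac cpi; rewrite ltNge cac.
  nra.
have api2 : a < pi / 2.
  rewrite ltNge; apply/negP => H.
  have := @cos_anti R (pi/2) a (ltW (divr_gt0 pi0 (ltr0Sn _ 1))) H api.
  by rewrite cos_pihalf leNgt ca.
have sa := @sin_ge_xcos R a; rewrite a0 api /= in sa; have {}sa := sa isT.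
have ea0 : 0 <= eps * a by rewrite mulr_ge0// ltW.
have sea := @sin_ge_half R (eps * a); rewrite ea0 /= in sea.
have {}sea : eps * a / 2 <= sin (eps * a).
  by apply: sea; apply: le_trans (ltW api2); rewrite ler_piMl.
have cea := cos_le1 (eps * a).
have ct := cos_ge_taylor h.
rewrite leNgt; apply/negP => bc.
have := @cos_lt R ((1 + eps) * a) c (mulr_ge0 (addr_ge0 ler01 (ltW e0)) a0) bc cpi.
rewrite mulrDl mul1r cosD cc.
apply/negP; rewrite -leNgt.
have sa0 : 0 <= sin a by apply: sin_ge0_pi; rewrite a0.
nra.
Qed.


Definition chH {R : realType} (t : R) := (expR t + expR (- t)) / 2.
Definition shH {R : realType} (t : R) := (expR t - expR (- t)) / 2.

Lemma expRNK {R : realType} (t : R) : expR t * expR (- t) = 1.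
Proof. by rewrite -expRD subrr expR0. Qed.

Lemma chsh {R : realType} (t : R) : chH t ^+ 2 - shH t ^+ 2 = 1.
Proof. rewrite /chH /shH; have := expRNK t; nra. Qed.

Lemma chD {R : realType} (x y : R) : chH (x + y) = chH x * chH y + shH x * shH y.
Proof. rewrite /chH /shH opprD !expRD; by field. Qed.

Lemma shD {R : realType} (x y : R) : shH (x + y) = shH x * chH y + chH x * shH y.
Proof. rewrite /chH /shH opprD !expRD; by field. Qed.

Lemma chN {R : realType} (x : R) : chH (- x) = chH x.
Proof. by rewrite /chH opprK addrC. Qed.

Lemma shN {R : realType} (x : R) : shH (- x) = - shH x.
Proof. rewrite /shH opprK; by field. Qed.

Lemma ch0 {R : realType} : chH (0 : R) = 1.
Proof. by rewrite /chH oppr0 expR0; lra. Qed.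

Lemma sh0 {R : realType} : shH (0 : R) = 0.
Proof. by rewrite /shH oppr0 expR0; lra. Qed.

Lemma sh_gt0 {R : realType} {t : R} : 0 < t -> 0 < shH t.
Proof.
move=> t0; rewrite /shH divr_gt0// subr_gt0 ltr_expR; lra.
Qed.

Lemma sh_ge0 {R : realType} {t : R} : 0 <= t -> 0 <= shH t.
Proof.
move=> t0; rewrite /shH divr_ge0// subr_ge0 ler_expR; lra.
Qed.

Lemma ch_ge1 {R : realType} (t : R) : 1 <= chH t.
Proof.
have := chsh t; have : 0 <= chH t by rewrite /chH divr_ge0// addr_ge0// expR_ge0.
nra.
Qed.

Lemma ch_lt {R : realType} {x y : R} : 0 <= x -> x < y -> chH x < chH y.
Proof.
move=> x0 xy.
have -> : y = x + (y - x) by ring.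
rewrite chD.
have s0 := sh_ge0 x0.
have s1 : 0 < shH (y - x) by apply: sh_gt0; rewrite subr_gt0.
have c1 := ch_ge1 x.
have c2 : 1 < chH (y - x).
  have := chsh (y - x); have := ch_ge1 (y - x); nra.
nra.
Qed.

Lemma ch_le {R : realType} {x y : R} : 0 <= x -> x <= y -> chH x <= chH y.
Proof.
move=> x0; rewrite le_eqVlt => /orP[/eqP->//|xy]; exact/ltW/ch_lt.
Qed.

Lemma ch_le_inv {R : realType} {x y : R} : 0 <= y -> chH x <= chH y -> 0 <= x -> x <= y.
Proof.
move=> y0 H x0; rewrite leNgt; apply/negP => yx.
by have := ch_lt y0 yx; rewrite ltNge H.
Qed.

Definition arcoshR {R : realType} (t : R) : R := ln (t + Num.sqrt (t ^+ 2 - 1)).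

Lemma arcosh_ch {R : realType} (t : R) : 0 <= t -> ln (chH t + Num.sqrt (chH t ^+ 2 - 1)) = t.
Proof.
move=> t0.
have -> : chH t ^+ 2 - 1 = shH t ^+ 2 by have := chsh t; lra.
rewrite sqrtr_sqr ger0_norm ?sh_ge0//.
have -> : chH t + shH t = expR t by rewrite /chH /shH; field.
by rewrite expRK.
Qed.

Lemma ch_arcosh {R : realType} (z : R) : 1 <= z ->
  0 <= ln (z + Num.sqrt (z ^+ 2 - 1)) /\ chH (ln (z + Num.sqrt (z ^+ 2 - 1))) = z.
Proof.
move=> z1.
set s := Num.sqrt (z ^+ 2 - 1).
have s0 : 0 <= s by apply: sqrtr_ge0.
have ss : s ^+ 2 = z ^+ 2 - 1 by rewrite sqr_sqrtr// subr_ge0; nra.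
have w1 : 1 <= z + s by lra.
have w0 : 0 < z + s by lra.
split; first exact: ln_ge0.
rewrite /chH lnK ?posrE// expRN lnK ?posrE//.
have -> : (z + s)^-1 = z - s.
  apply: (@mulfI _ (z + s)); first by rewrite gt_eqF.
  by rewrite mulfV ?gt_eqF//; nra.
lra.
Qed.

Lemma expR_half {R : realType} (x : R) : expR x = expR (x / 2) ^+ 2.
Proof. by rewrite expr2 -expRD -splitr. Qed.

Lemma ch_sub1_le {R : realType} (h : R) : 0 <= h -> h <= 1/2 -> chH h - 1 <= h ^+ 2.
Proof.
move=> h0 h1.
set u := h / 2.
have -> : h = 2 * u by rewrite /u; field.
have u0 : 0 <= u by rewrite /u divr_ge0.
have u1 : u <= 1/4 by rewrite /u; lra.
rewrite /chH.
have -> : expR (2 * u) = expR u ^+ 2 by rewrite expr2 -expRD; congr expR; ring.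
have -> : expR (- (2 * u)) = expR (- u) ^+ 2 by rewrite expr2 -expRD; congr expR; ring.
have XY := expRNK u.
have X1 := expR_ge1Dx u.
have Y1 := expR_ge1Dx (- u).
set X := expR u in XY X1 *; set Y := expR (- u) in XY Y1 *.
have X0 : 0 <= X by lra.
have XU : X * (1 - u) <= 1 by nra.
have D0 : 0 <= X - Y by nra.
have D1 : (X - Y) * (1 - u) <= u * (2 - u) by nra.
have D2 : X - Y <= 7 / 3 * u.
  have : u * (2 - u) <= 7 / 3 * u * (1 - u) by nra.
  nra.
have -> : (X ^+ 2 + Y ^+ 2) / 2 - 1 = (X - Y) ^+ 2 / 2.
  have E : (X ^+ 2 + Y ^+ 2) / 2 - X * Y = (X - Y) ^+ 2 / 2 by field.
  by rewrite XY in E.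
nra.
Qed.

Lemma ch_conv {R : realType} (a d : R) : 0 <= d -> chH a + d * shH a <= chH (a + d).
Proof.
move=> d0; rewrite /chH /shH opprD !expRD.
have e1 := expR_ge1Dx d; have e2 := expR_ge1Dx (- d).
have p1 := expR_gt0 a; have p2 := expR_gt0 (- a).
nra.
Qed.

Lemma a_cha {R : realType} (a : R) : 0 <= a -> a * chH a <= expR a * shH a.
Proof.
move=> a0; rewrite /chH /shH.
have XY := expRNK a.
have X1 := expR_ge1Dx a.
have p2 := expR_gt0 (- a).
set X := expR a in XY X1 *; set Y := expR (- a) in XY p2 *.
have Y1 : Y <= 1 by nra.
nra.
Qed.

Lemma two_a_le_exp {R : realType} (a : R) : 2 * a <= expR a.
Proof.
rewrite expR_half; have := expR_ge1Dx (a / 2); have := expR_gt0 (a / 2).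
set X := expR (a / 2) => X0 X1.
case: (lerP 0 (1 + a / 2)) => H.
  have : (1 + a / 2) ^+ 2 <= X ^+ 2 by rewrite ler_pXn2r// nnegrE ltW.
  have := sqr_ge0 (1 - a / 2); nra.
nra.
Qed.

Lemma hyp_bound {R : realType} (a h c eps D : R) : 0 <= a -> a <= D -> 0 <= h ->
  h <= Num.sqrt eps * a -> 0 < eps <= 1 -> 0 <= c ->
  chH c = chH a * chH h -> c <= (1 + expR D * eps) * a.
Proof.
move=> a0 aD h0 ha /andP[e0 e1] c0 cc.
have hh := sqr_le_of_le_sqrt h0 (ltW e0) a0 ha.
have ha' : h <= a by nra.
have KD : expR a <= expR D by rewrite ler_expR.
have K0 := expR_gt0 a.
have eD0 := expR_gt0 D.
case: (eqVneq a 0) => [a_0|an0].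
  have h_0 : h = 0 by lra.
  rewrite a_0 mulr0; apply: ch_le_inv => //.
  by rewrite cc a_0 h_0 ch0 mulr1.
have apos : 0 < a by rewrite lt0r an0.
set K := expR a in KD K0.
suff : c <= a + K * h ^+ 2 / a.
  move=> H; apply: (le_trans H).
  have : K * h ^+ 2 / a <= expR D * eps * a.
    rewrite ler_pdivrMr//.
    have : K * h ^+ 2 <= expR D * (eps * a ^+ 2).
      apply: ler_pM => //; first by rewrite ltW.
      by rewrite sqr_ge0.
    lra.
  lra.
have dK : K * h ^+ 2 / a * a = K * h ^+ 2 by rewrite divfK.
have chh1 := ch_ge1 h.
have cha1 := ch_ge1 a.
case: (lerP a (K * h)) => Kh.
  apply: (@le_trans _ _ (a + h)).
    apply: ch_le_inv => //; first lra.
    rewrite cc chD.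
    have := sh_ge0 a0; have := sh_ge0 h0; nra.
  set d := K * h ^+ 2 / a in dK *.
  suff : h <= d by lra.
  have : h * a <= d * a by rewrite dK; nra.
  by rewrite ler_pM2r.
set d := K * h ^+ 2 / a in dK *.
have d0 : 0 <= d by rewrite /d divr_ge0// ?mulr_ge0// ?sqr_ge0 ?ltW.
have h12 : h <= 1/2.
  have := two_a_le_exp a; rewrite -/K => H.
  have : K * (2 * h) < K * 1 by rewrite mulr1 mulrCA; lra.
  rewrite ltr_pM2l // => H2; lra.
have c1 := @ch_sub1_le R h h0 h12.
have ac := @a_cha R a a0; rewrite -/K in ac.
apply: ch_le_inv => //; first lra.
apply: (le_trans _ (@ch_conv R a d d0)).
rewrite cc.
have sa0 := sh_ge0 a0.
have s1 : chH a * chH h <= chH a + chH a * h ^+ 2 by nra.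
have s2 : (chH a * h ^+ 2) * a <= (d * shH a) * a.
  have -> : (d * shH a) * a = (K * shH a) * h ^+ 2 by rewrite mulrAC dK; ring.
  have -> : (chH a * h ^+ 2) * a = (a * chH a) * h ^+ 2 by ring.
  by apply: ler_wpM2r => //; apply: sqr_ge0.
rewrite ler_pM2r// in s2.
lra.
Qed.



Lemma B_add {R : realType} {n : nat} {B : 'rV[R]_n -> 'rV[R]_n -> R}
  (Bl : forall a u v w, B (a *: u + v) w = a * B u w + B v w) u v w :
  B (u + v) w = B u w + B v w.
Proof. by have := Bl 1 u v w; rewrite scale1r mul1r. Qed.

Lemma B_0 {R : realType} {n : nat} {B : 'rV[R]_n -> 'rV[R]_n -> R}
  (Bl : forall a u v w, B (a *: u + v) w = a * B u w + B v w) w :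
  B 0 w = 0.
Proof.
have := B_add Bl 0 0 w; rewrite addr0; lra.
Qed.

Lemma B_scale {R : realType} {n : nat} {B : 'rV[R]_n -> 'rV[R]_n -> R}
  (Bl : forall a u v w, B (a *: u + v) w = a * B u w + B v w) a u w :
  B (a *: u) w = a * B u w.
Proof. by rewrite -[a *: u]addr0 Bl B_0 // addr0. Qed.

Lemma B_sub {R : realType} {n : nat} {B : 'rV[R]_n -> 'rV[R]_n -> R}
  (Bl : forall a u v w, B (a *: u + v) w = a * B u w + B v w) u v w :
  B (u - v) w = B u w - B v w.
Proof. by rewrite B_add // -scaleN1r B_scale // mulN1r. Qed.

Lemma quad3 {R : realType} {n : nat} {B : 'rV[R]_n -> 'rV[R]_n -> R}
  (Bl : forall a u v w, B (a *: u + v) w = a * B u w + B v w)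
  (Bs : forall u v, B u v = B v u) (a b c : R) (u v w : 'rV[R]_n) :
  B (a *: u - b *: v - c *: w) (a *: u - b *: v - c *: w) =
  a ^+ 2 * B u u + b ^+ 2 * B v v + c ^+ 2 * B w w
  - 2 * a * b * B u v - 2 * a * c * B u w + 2 * b * c * B v w.
Proof.
rewrite !B_sub // !B_scale //.
rewrite [B u (_ - _)]Bs [B v (_ - _)]Bs [B w (_ - _)]Bs.
rewrite !B_sub // !B_scale //.
rewrite [B v u]Bs [B w u]Bs [B w v]Bs.
ring.
Qed.

Lemma lin3 {R : realType} {n : nat} {B : 'rV[R]_n -> 'rV[R]_n -> R}
  (Bl : forall a u v w, B (a *: u + v) w = a * B u w + B v w)
  (Bs : forall u v, B u v = B v u) (a b c : R) (x u v w : 'rV[R]_n) :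
  B x (a *: u - b *: v - c *: w) = a * B x u - b * B x v - c * B x w.
Proof.
rewrite Bs !B_sub // !B_scale //.
by rewrite [B u x]Bs [B v x]Bs [B w x]Bs.
Qed.

Lemma dotE_sym {R : realType} {n : nat} (u v : 'rV[R]_n) : dotE u v = dotE v u.
Proof. by rewrite /dotE; apply: eq_bigr => i _; rewrite mulrC. Qed.

Lemma dotE_lin {R : realType} {n : nat} (a : R) (u v w : 'rV[R]_n) :
  dotE (a *: u + v) w = a * dotE u w + dotE v w.
Proof.
rewrite /dotE mulr_sumr -big_split /=; apply: eq_bigr => i _.
by rewrite !mxE mulrDl mulrA.
Qed.

Lemma dotE_ge0 {R : realType} {n : nat} (u : 'rV[R]_n) : 0 <= dotE u u.
Proof. by rewrite /dotE sumr_ge0// => i _; rewrite -expr2 sqr_ge0. Qed.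

Lemma dotE_eq0 {R : realType} {n : nat} (u : 'rV[R]_n) : dotE u u = 0 -> u = 0.
Proof.
move=> /eqP; rewrite /dotE psumr_eq0 => [/allP H|i _]; last by rewrite -expr2 sqr_ge0.
apply/rowP => i; rewrite mxE.
have := H i (mem_index_enum i); rewrite implyTb mulf_eq0 orbb.
by move/eqP.
Qed.

Lemma mink_lin {R : realType} {n : nat} (a : R) (u v w : 'rV[R]_n.+1) :
  Defs.minkowski (a *: u + v) w = a * Defs.minkowski u w + Defs.minkowski v w.
Proof.
rewrite /Defs.minkowski.
have -> : \sum_(i < n) (a *: u + v) 0 (lift ord0 i) * w 0 (lift ord0 i) =
  a * \sum_(i < n) u 0 (lift ord0 i) * w 0 (lift ord0 i) + \sum_(i < n) v 0 (lift ord0 i) * w 0 (lift ord0 i).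
  rewrite mulr_sumr -big_split /=; apply: eq_bigr => i _.
  by rewrite !mxE mulrDl mulrA.
rewrite !mxE; ring.
Qed.

Lemma mink_sym {R : realType} {n : nat} (u v : 'rV[R]_n.+1) : Defs.minkowski u v = Defs.minkowski v u.
Proof.
rewrite /Defs.minkowski mulrC; congr (_ + _); apply: eq_bigr => i _; by rewrite mulrC.
Qed.

Lemma CS_sum {R : realType} {n : nat} (a b : 'I_n -> R) :
  (\sum_(i < n) a i * b i) ^+ 2 <= (\sum_(i < n) a i ^+ 2) * (\sum_(i < n) b i ^+ 2).
Proof.
set A := \sum_(i < n) a i ^+ 2; set B := \sum_(i < n) b i ^+ 2; set C := \sum_(i < n) a i * b i.
have B0 : 0 <= B by rewrite sumr_ge0// => i _; rewrite sqr_ge0.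
have A0 : 0 <= A by rewrite sumr_ge0// => i _; rewrite sqr_ge0.
have key : 0 <= \sum_(i < n) (B * a i - C * b i) ^+ 2 by rewrite sumr_ge0// => i _; rewrite sqr_ge0.
have E : \sum_(i < n) (B * a i - C * b i) ^+ 2 = B * (A * B - C ^+ 2).
  have -> : \sum_(i < n) (B * a i - C * b i) ^+ 2 =
     \sum_(i < n) (B ^+ 2 * a i ^+ 2 - (2 * B * C) * (a i * b i) + C ^+ 2 * b i ^+ 2).
    by apply: eq_bigr => i _; ring.
  rewrite big_split /= big_split /= sumrN -!mulr_sumr -/A -/B -/C; ring.
rewrite E in key.
case: (eqVneq B 0) => [B_0|Bn0].
  have bz : forall i, b i = 0.
    move=> i; apply/eqP; rewrite -sqrf_eq0; apply/eqP.
    move/eqP: B_0; rewrite /B psumr_eq0 => [/allP H|j _]; last by rewrite sqr_ge0.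
    by apply/eqP; have := H i (mem_index_enum i); rewrite implyTb.
  have -> : C = 0 by rewrite /C big1// => i _; rewrite bz mulr0.
  by rewrite B_0 expr0n /= mulr0.
have Bp : 0 < B by rewrite lt0r Bn0.
rewrite pmulr_rge0// subr_ge0 in key.
exact: key.
Qed.

Definition vt {R : realType} {n : nat} (v : 'rV[R]_n.+1) : R := v 0 ord0.
Definition vs {R : realType} {n : nat} (v : 'rV[R]_n.+1) (i : 'I_n) : R := v 0 (lift ord0 i).

Lemma mink_E {R : realType} {n : nat} (u v : 'rV[R]_n.+1) :
  Defs.minkowski u v = - (vt u * vt v) + \sum_(i < n) vs u i * vs v i.
Proof. by []. Qed.

Lemma lorentz {R : realType} {n : nat} (v w : 'rV[R]_n.+1) :
  Defs.minkowski w w = -1 -> Defs.minkowski v w = 0 ->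
  0 <= Defs.minkowski v v /\ (Defs.minkowski v v = 0 -> v = 0).
Proof.
rewrite !mink_E => ww vw.
set S := \sum_(i < n) vs v i ^+ 2.
have S0 : 0 <= S by rewrite sumr_ge0// => i _; rewrite sqr_ge0.
have W0 : 0 <= \sum_(i < n) vs w i ^+ 2 by rewrite sumr_ge0// => i _; rewrite sqr_ge0.
have cs := CS_sum (vs v) (vs w).
have ww' : \sum_(i < n) vs w i ^+ 2 = vt w ^+ 2 - 1.
  rewrite -(eq_bigr _ (fun i _ => esym (expr2 (vs w i)))) in ww; lra.
have vw' : \sum_(i < n) vs v i * vs w i = vt v * vt w by lra.
rewrite vw' ww' -/S in cs.
have w1 : 1 <= vt w ^+ 2 by lra.
have key : S <= (- (vt v * vt v) + S) * vt w ^+ 2 by nra.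
split; first nra.
move=> Q0.
have S_0 : S = 0 by nra.
have v0 : vt v = 0 by nra.
have vsz : forall i, vs v i = 0.
  move=> i; apply/eqP; rewrite -sqrf_eq0; apply/eqP.
  move/eqP: S_0; rewrite /S psumr_eq0 => [/allP H|j _]; last by rewrite sqr_ge0.
  by apply/eqP; have := H i (mem_index_enum i); rewrite implyTb.
apply/rowP => i; rewrite mxE.
case: (unliftP ord0 i) => [j ->|->]; [exact: vsz | exact: v0].
Qed.


Lemma min_split {R : realType} {h s a b : R} : 0 <= s -> h <= s * Num.min a b ->
  h <= s * a /\ h <= s * b.
Proof.
move=> s0 H; split; apply: (le_trans H); apply: ler_wpM2l => //; by rewrite ge_min lexx ?orbT.
Qed.

Lemma le_of_sqr {R : realType} {X Y : R} : 0 <= Y -> X ^+ 2 <= Y ^+ 2 -> X <= Y.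
Proof.
move=> Y0 H; case: (lerP X 0) => X0; first exact: le_trans X0 Y0.
by rewrite -(ler_pXn2r (n:=2)) ?nnegrE// ltW.
Qed.

Lemma quad2 {R : realType} {n : nat} {B : 'rV[R]_n -> 'rV[R]_n -> R}
  (Bl : forall a u v w, B (a *: u + v) w = a * B u w + B v w)
  (Bs : forall u v, B u v = B v u) (a b : R) (u v : 'rV[R]_n) :
  B (a *: u - b *: v) (a *: u - b *: v) =
  a ^+ 2 * B u u + b ^+ 2 * B v v - 2 * a * b * B u v.
Proof.
rewrite !B_sub // !B_scale // [B u (_ - _)]Bs [B v (_ - _)]Bs !B_sub // !B_scale //.
rewrite [B v u]Bs; ring.
Qed.

Lemma quad2' {R : realType} {n : nat} {B : 'rV[R]_n -> 'rV[R]_n -> R}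
  (Bl : forall a u v w, B (a *: u + v) w = a * B u w + B v w)
  (Bs : forall u v, B u v = B v u) (u v : 'rV[R]_n) :
  B (u - v) (u - v) = B u u + B v v - 2 * B u v.
Proof.
have := quad2 Bl Bs 1 1 u v; rewrite !scale1r => ->; ring.
Qed.

Lemma distE_sq {R : realType} {d : nat} (u v : 'rV[R]_d) : distE u v ^+ 2 = dotE (u - v) (u - v).
Proof. by rewrite /distE sqr_sqrtr// dotE_ge0. Qed.

Lemma distE_ge0 {R : realType} {d : nat} (u v : 'rV[R]_d) : 0 <= distE u v.
Proof. exact: sqrtr_ge0. Qed.

Lemma distE_sym {R : realType} {d : nat} (u v : 'rV[R]_d) : distE u v = distE v u.
Proof.
rewrite /distE -opprB; congr Num.sqrt.
by rewrite -scaleN1r B_scale; [rewrite dotE_sym B_scale; [ring|exact: dotE_lin]|exact: dotE_lin].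
Qed.

Lemma eucl_case {R : realType} {d : nat} (p q x y : 'rV[R]_d) (g : R -> 'rV[R]_d) (eps : R) :
     shortest_segment (@ptE R d) (@distE R d) p q g ->
     closest_on_segment (@distE R d) p q g x y ->
     0 < eps <= 1 ->
     distE x y <= Num.sqrt eps * Num.min (distE p y) (distE q y) ->
     distE p x + distE x q <= (1 + eps) * distE p q.
Proof.
move=> [g0 [gL [_ iso]]] [t0 [t0I [yE ymin]]] /andP[e0 e1] H.
set L := distE p q in gL iso t0I ymin *.
have L0 : 0 <= L := distE_ge0 p q.
have /andP[t00 t0L] := t0I.
have Ha : distE p y = t0.
  by rewrite -g0 yE iso ?lexx ?L0 // sub0r normrN ger0_norm.
have Hb : distE q y = L - t0.
  by rewrite -{1}gL yE iso ?lexx ?L0 // ger0_norm // subr_ge0.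
rewrite Ha Hb in H.
have se0 : 0 <= Num.sqrt eps := sqrtr_ge0 eps.
have [Hha Hhb] := min_split se0 H.
set h := distE x y in H Hha Hhb ymin.
have h0 : 0 <= h := distE_ge0 x y.
case: (eqVneq h 0) => [h_0|hn0].
  have xy : x = y.
    apply/eqP; rewrite -subr_eq0; apply/eqP; apply: dotE_eq0.
    by rewrite -distE_sq -/h h_0 expr0n.
  rewrite xy Ha distE_sym Hb; nra.
have hp : 0 < h by rewrite lt0r hn0.
have t0p : 0 < t0 by nra.
have t0L' : t0 < L by nra.
have Lp : 0 < L by lra.
have gaff : forall t, 0 <= t <= L -> L *: (g t - p) = t *: (q - p).
  move=> t tI; have /andP[t0' tL] := tI.
  apply/eqP; rewrite -subr_eq0; apply/eqP; apply: dotE_eq0.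
  rewrite quad2 //; [|exact: dotE_lin|exact: dotE_sym].
  have A1 : dotE (g t - p) (g t - p) = t ^+ 2.
    by rewrite -distE_sq -g0 iso // ?lexx ?L0 // subr0 ger0_norm.
  have A2 : dotE (q - p) (q - p) = L ^+ 2 by rewrite /L distE_sym distE_sq.
  have A3 : dotE ((g t - p) - (q - p)) ((g t - p) - (q - p)) = (L - t) ^+ 2.
    have -> : (g t - p) - (q - p) = g t - q by rewrite opprB addrA subrK.
    rewrite -distE_sq; have := iso t L tI; rewrite lexx L0 gL => /(_ isT) ->; by rewrite distrC ger0_norm // subr_ge0.
  rewrite quad2' in A3; [|exact: dotE_lin|exact: dotE_sym].
  rewrite A1 A2 in A3 *.
  have -> : dotE (g t - p) (q - p) = t * L by lra.
  ring.
set w := x - p.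
set c := dotE w (q - p) / L.
have fE : forall t, 0 <= t <= L -> distE x (g t) ^+ 2 = dotE w w - 2 * t * c + t ^+ 2.
  move=> t tI.
  have gt : g t = p + (t / L) *: (q - p).
    apply: (@scalerI _ _ L); first by rewrite gt_eqF.
    rewrite scalerDr scalerA mulrC divfK ?gt_eqF // -gaff // scalerDr scalerN.
    by rewrite addrC subrK.
  rewrite distE_sq (_ : x - g t = 1 *: w - (t / L) *: (q - p)); last first.
    by rewrite scale1r gt /w opprD addrA.
  rewrite quad2; [|exact: dotE_lin|exact: dotE_sym].
  rewrite -distE_sq distE_sym -/L /c; field; by rewrite gt_eqF.
have fmin : forall t, 0 <= t <= L -> t0 ^+ 2 - 2 * t0 * c <= t ^+ 2 - 2 * t * c.
  move=> t tI.
  have : h ^+ 2 <= distE x (g t) ^+ 2.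
    by rewrite ler_pXn2r ?nnegrE ?distE_ge0 // ymin.
  rewrite /h yE !fE //; lra.
have ct : c = t0.
  case: (ltgtP c t0) => // ct.
    case: (lerP c 0) => c0.
      have := fmin 0; rewrite lexx L0 /= => /(_ isT); nra.
    have := fmin c; rewrite (ltW c0) (ltW (lt_trans ct t0L')) /= => /(_ isT); nra.
  case: (lerP L c) => cL.
    have := fmin L; rewrite lexx L0 /= => /(_ isT); nra.
  have := fmin c; rewrite (ltW cL) (ltW (le_lt_trans t00 ct)) /= => /(_ isT); nra.
have hE : h ^+ 2 = dotE w w - t0 ^+ 2 by rewrite /h yE fE // ct; ring.
have pxE : distE p x ^+ 2 = h ^+ 2 + t0 ^+ 2.
  by rewrite distE_sym -[p]g0 fE ?lexx ?L0 // hE; ring.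
have qxE : distE x q ^+ 2 = h ^+ 2 + (L - t0) ^+ 2.
  by rewrite -[q]gL fE ?lexx ?L0 // hE ct; ring.
have hh1 := sqr_le_of_le_sqrt h0 (ltW e0) t00 Hha.
have Lt0 : 0 <= L - t0 by lra.
have hh2 := sqr_le_of_le_sqrt h0 (ltW e0) Lt0 Hhb.
have B1 : distE p x <= (1 + eps) * t0.
  apply: le_of_sqr; first nra.
  rewrite pxE; nra.
have B2 : distE x q <= (1 + eps) * (L - t0).
  apply: le_of_sqr; first nra.
  rewrite qxE; nra.
lra.
Qed.


Lemma quadP {R : realType} {n : nat} {B : 'rV[R]_n -> 'rV[R]_n -> R}
  (Bl : forall a u v w, B (a *: u + v) w = a * B u w + B v w)
  (Bs : forall u v, B u v = B v u) (u v : 'rV[R]_n) :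
  B (u + v) (u + v) = B u u + B v v + 2 * B u v.
Proof.
rewrite !B_add // [B u (_ + _)]Bs [B v (_ + _)]Bs !B_add // [B v u]Bs; ring.
Qed.

Lemma dot_unit_bound {R : realType} {d : nat} {u v : 'rV[R]_d.+1} :
  ptS u -> ptS v -> -1 <= dotE u v <= 1.
Proof.
rewrite /ptS => uu vv.
have h1 := dotE_ge0 (u - v); rewrite quad2' in h1; [|exact: dotE_lin|exact: dotE_sym].
have h2 := dotE_ge0 (u + v); rewrite quadP in h2; [|exact: dotE_lin|exact: dotE_sym].
rewrite uu vv in h1 h2; apply/andP; split; lra.
Qed.

Lemma cos_distS {R : realType} {d : nat} {u v : 'rV[R]_d.+1} :
  ptS u -> ptS v -> cos (distS u v) = dotE u v.
Proof.
move=> pu pv; rewrite /distS acosK // in_itv /=; exact: dot_unit_bound.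
Qed.

Lemma distS_range {R : realType} {d : nat} {u v : 'rV[R]_d.+1} :
  ptS u -> ptS v -> 0 <= distS u v /\ distS u v <= pi.
Proof.
move=> pu pv; have := dot_unit_bound pu pv => H.
by split; [apply: acos_ge0 | apply: acos_lepi].
Qed.

Lemma distS_sym {R : realType} {d : nat} (u v : 'rV[R]_d.+1) : distS u v = distS v u.
Proof. by rewrite /distS dotE_sym. Qed.

Lemma perp_sph {R : realType} (A F t0 L : R) (f : R -> R) :
  0 < t0 -> t0 < L -> L <= pi -> -1 <= A <= 1 ->
  (forall t, 0 <= t <= L -> f t <= A) ->
  (forall t, 0 <= t <= L -> sin t * A - sin (t - t0) * F - sin t0 * f t = 0) ->
  F = cos t0 * A.
Proof.
move=> t0p t0L Lpi /andP[A1 A2] fle rel.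
have st0 : 0 < sin t0 by apply: sin_gt0_pi; rewrite t0p /=; lra.
have st1 := sin_le1 t0.
have pi0 := pi_gt0 R.
have pi2 := pihalf_ge1 R.
set D := cos t0 * A - F.
have key : forall s, 0 <= t0 + s <= L -> sin s * D <= 1 - cos s.
  move=> s sI.
  have := rel (t0 + s) sI; have := fle (t0 + s) sI.
  rewrite (addrC t0 s) addrK sinD.
  have c1 := cos_le1 s.
  move=> H1 H2.
  have : sin s * D <= sin t0 * A * (1 - cos s) by rewrite /D; nra.
  have : sin t0 * A <= 1 by nra.
  nra.
have key2 : forall s, 0 <= t0 + s <= L -> 0 <= cos s -> sin s * D <= sin s ^+ 2.
  move=> s sI cs; apply: (le_trans (key s sI)).
  rewrite sin2cos2; have := cos_le1 s; nra.
apply/eqP; rewrite -subr_eq0 -oppr_eq0 opprB -/D; apply/eqP.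
case: (ltgtP D 0) => // Dlt.
-
  set s := Num.min (- D) (Num.min t0 1) / 2.
  have s0 : 0 < s by rewrite divr_gt0// lt_min oppr_gt0 Dlt lt_min t0p ltr01.
  have sD : s <= - D / 2 by rewrite ler_pM2r ?invr_gt0// ge_min lexx.
  have st : s <= t0 / 2 by rewrite ler_pM2r ?invr_gt0// !ge_min lexx orbT.
  have s1 : s <= 1 / 2 by rewrite ler_pM2r ?invr_gt0// !ge_min lexx !orbT.
  have cs : 0 <= cos s by apply: cos_ge0_pihalf; apply/andP; split; lra.
  have ss : 0 < sin s by apply: sin_gt0_pihalf; apply/andP; split; lra.
  have sle := @sin_le_id R s (ltW s0).
  have H2 : - sin s * D <= sin s ^+ 2.
    have := key2 (- s); rewrite cosN sinN sqrrN; apply => //; apply/andP; split; lra.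
  have : - D <= sin s by nra.
  lra.
-
  set s := Num.min D (Num.min (L - t0) 1) / 2.
  have Lt : 0 < L - t0 by lra.
  have s0 : 0 < s by rewrite divr_gt0// lt_min Dlt lt_min Lt ltr01.
  have sD : s <= D / 2 by rewrite ler_pM2r ?invr_gt0// ge_min lexx.
  have st : s <= (L - t0) / 2 by rewrite ler_pM2r ?invr_gt0// !ge_min lexx orbT.
  have s1 : s <= 1 / 2 by rewrite ler_pM2r ?invr_gt0// !ge_min lexx !orbT.
  have cs : 0 <= cos s by apply: cos_ge0_pihalf; apply/andP; split; lra.
  have ss : 0 < sin s by apply: sin_gt0_pihalf; apply/andP; split; lra.
  have sle := @sin_le_id R s (ltW s0).
  have : sin s * D <= sin s ^+ 2 by apply: key2 => //; apply/andP; split; lra.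
  move=> H2.
  have : D <= sin s by nra.
  lra.
Qed.

Lemma sph_id {R : realType} (t0 b : R) :
  sin (t0 + b) ^+ 2 + sin b ^+ 2 + sin t0 ^+ 2 - 2 * sin (t0 + b) * sin b * cos t0
  - 2 * sin (t0 + b) * sin t0 * cos b + 2 * sin b * sin t0 * cos (t0 + b) = 0.
Proof.
rewrite sinD cosD.
have h1 := cos2Dsin2 t0; have h2 := cos2Dsin2 b.
set S1 := sin t0 in h1 *; set C1 := cos t0 in h1 *; set S2 := sin b in h2 *; set C2 := cos b in h2 *.
have -> : (S1 * C2 + C1 * S2) ^+ 2 + S2 ^+ 2 + S1 ^+ 2 - 2 * (S1 * C2 + C1 * S2) * S2 * C1 -
  2 * (S1 * C2 + C1 * S2) * S1 * C2 + 2 * S2 * S1 * (C1 * C2 - S1 * S2) =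
  S1 ^+ 2 * (1 - (C2 ^+ 2 + S2 ^+ 2)) + S2 ^+ 2 * (1 - (C1 ^+ 2 + S1 ^+ 2)) by ring.
by rewrite h1 h2 subrr !mulr0 addr0.
Qed.

Lemma sph_case {R : realType} {d : nat} (p q x y : 'rV[R]_d.+1) (g : R -> 'rV[R]_d.+1) (eps : R) :
     ptS p -> ptS q -> ptS x ->
     shortest_segment (@ptS R d) (@distS R d) p q g ->
     closest_on_segment (@distS R d) p q g x y ->
     0 < eps <= 1 ->
     distS x y <= Num.sqrt eps * Num.min (distS p y) (distS q y) ->
     distS p x + distS x q <= (1 + eps) * distS p q.
Proof.
move=> pp pq px [g0 [gL [gpt iso]]] [t0 [t0I [yE ymin]]] /andP[e0 e1] H.
have [L0 Lpi] := distS_range pp pq.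
set L := distS p q in gL gpt iso t0I ymin L0 Lpi *.
have /andP[t00 t0L] := t0I.
have I0 : (0:R) <= 0 <= L by apply/andP; split.
have IL : 0 <= L <= L by apply/andP; split.
have Ha : distS p y = t0.
  by rewrite -g0 yE iso // sub0r normrN ger0_norm.
have Hb : distS q y = L - t0.
  have := iso L t0 IL t0I; rewrite gL -yE => ->; by rewrite ger0_norm // subr_ge0.
have py : ptS y by rewrite yE; apply: gpt.
have gram : forall s t, 0 <= s <= L -> 0 <= t <= L -> dotE (g s) (g t) = cos (s - t).
  by move=> s t sI tI; rewrite -(cos_distS (gpt s sI) (gpt t tI)) iso // cos_norm.
rewrite Ha Hb in H.
have se0 : 0 <= Num.sqrt eps := sqrtr_ge0 eps.
have [Hha Hhb] := min_split se0 H.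
have [h0 hpi] := distS_range px py.
set h := distS x y in H Hha Hhb ymin h0 hpi.
have xyc : dotE x y = cos h by rewrite -cos_distS.
case: (eqVneq h 0) => [h_0|hn0].
  have xy : x = y.
    apply/eqP; rewrite -subr_eq0; apply/eqP; apply: dotE_eq0.
    rewrite quad2'; [|exact: dotE_lin|exact: dotE_sym].
    by rewrite px py xyc h_0 cos0; ring.
  rewrite xy Ha distS_sym Hb; nra.
have hp : 0 < h by rewrite lt0r hn0.
have t0p : 0 < t0 by nra.
have t0L' : t0 < L by nra.
set A := dotE x y.
set F := dotE x p.
set f := fun t => dotE x (g t).
have Ab := dot_unit_bound px py.
have fle : forall t, 0 <= t <= L -> f t <= A.
  move=> t tI; rewrite /f /A -(cos_distS px (gpt t tI)) -(cos_distS px py).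
  have [u0 upi] := distS_range px (gpt t tI).
  by apply: cos_anti => //; apply: ymin.
have rel : forall t, 0 <= t <= L -> sin t * A - sin (t - t0) * F - sin t0 * f t = 0.
  move=> t tI.
  have v0 : sin t *: y - sin (t - t0) *: p - sin t0 *: g t = 0.
    apply: dotE_eq0; rewrite quad3; [|exact: dotE_lin|exact: dotE_sym].
    rewrite py pp (gpt t tI) yE !gram //.
    rewrite (_ : dotE (g t0) p = cos t0); last by rewrite -g0 gram // subr0.
    rewrite (_ : dotE p (g t) = cos t); last by rewrite -g0 gram // sub0r cosN.
    rewrite (_ : t0 - t = - (t - t0)); last by rewrite opprB.
    rewrite !cosN !mulr1.
    have := sph_id t0 (t - t0); rewrite (addrC t0) subrK => <-; ring.
  have := congr1 (dotE x) v0.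
  rewrite lin3; [|exact: dotE_lin|exact: dotE_sym].
  move=> ->; by rewrite /dotE big1 // => i _; rewrite mxE mulr0.
have FE := @perp_sph R A F t0 L f t0p t0L' Lpi Ab fle rel.
have st0 : 0 < sin t0 by apply: sin_gt0_pi; rewrite t0p /=; lra.
have fL : f L = cos (L - t0) * A.
  have := rel L IL.
  rewrite FE (_ : L = (L - t0) + t0); last by rewrite subrK.
  rewrite addrK sinD => E.
  apply: (@mulfI _ (sin t0)); first by rewrite gt_eqF.
  rewrite (subrK t0 L) in E *; lra.
have c1E : cos (distS p x) = cos t0 * cos h by rewrite cos_distS // dotE_sym -/F FE /A xyc.
have c2E : cos (distS x q) = cos (L - t0) * cos h.
  by rewrite cos_distS // -gL -/(f L) fL /A xyc.
have [c10 c1pi] := distS_range pp px.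
have [c20 c2pi] := distS_range px pq.
have eI : 0 < eps <= 1 by rewrite e0 e1.
have B1 := @sph_bound R t0 h (distS p x) eps t00 (le_trans t0L Lpi) h0 Hha eI c10 c1pi c1E.
have Lt0 : 0 <= L - t0 by lra.
have LtL : L - t0 <= pi by lra.
have B2 := @sph_bound R (L - t0) h (distS x q) eps Lt0 LtL h0 Hhb eI c20 c2pi c2E.
lra.
Qed.


Lemma sh_ln {R : realType} (e : R) : 0 < e ->
  0 < ln (1 + e) /\ ln (1 + e) <= e /\ 0 < shH (ln (1 + e)) /\ shH (ln (1 + e)) <= e.
Proof.
move=> e0.
have l0 : 0 < ln (1 + e) by apply: ln_gt0; lra.
have l1 : ln (1 + e) <= e by apply: le_ln1Dx; lra.
have sh0 := sh_gt0 l0.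
do 3!(split => //).
rewrite /shH expRN lnK ?posrE; last lra.
rewrite ler_pdivrMr //.
have h1 : 0 < 1 + e by lra.
have : (1 + e)^-1 * (1 + e) = 1 by rewrite mulVf // gt_eqF.
have : 0 < (1 + e)^-1 by rewrite invr_gt0.
nra.
Qed.

Lemma perp_hyp {R : realType} (A F t0 L : R) (f : R -> R) :
  0 < t0 -> t0 < L -> 1 <= A ->
  (forall t, 0 <= t <= L -> A <= f t) ->
  (forall t, 0 <= t <= L -> shH t * A - shH (t - t0) * F - shH t0 * f t = 0) ->
  F = chH t0 * A.
Proof.
move=> t0p t0L A1 fge rel.
have st0 := sh_gt0 t0p.
set K := shH t0 * A.
have K0 : 0 < K by rewrite /K mulr_gt0 //; lra.
set D := chH t0 * A - F.
have key : forall s, 0 <= t0 + s <= L -> - K * shH s ^+ 2 <= shH s * D.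
  move=> s sI.
  have := rel (t0 + s) sI; have := fge (t0 + s) sI.
  rewrite (addrC t0 s) addrK shD => H1 H2.
  have c1 := ch_ge1 s.
  have cs := chsh s.
  have H3 : shH t0 * A <= shH t0 * f (s + t0) by rewrite ler_pM2l.
  have : shH t0 * A * (1 - chH s) <= shH s * D by rewrite /D; nra.
  have : chH s - 1 <= shH s ^+ 2 by nra.
  move=> h1 h2; have h4 : K * (chH s - 1) <= K * shH s ^+ 2 by rewrite ler_pM2l.
  rewrite -/K in h2; nra.
apply/eqP; rewrite -subr_eq0 -oppr_eq0 opprB -/D; apply/eqP.
case: (ltgtP D 0) => // Dlt.
- set e := Num.min (- D / (2 * (K + 1))) (L - t0).
  have e0 : 0 < e by rewrite lt_min divr_gt0 ?mulr_gt0 //; lra.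
  have eD : e <= - D / (2 * (K + 1)) by rewrite ge_min lexx.
  have eL : e <= L - t0 by rewrite ge_min lexx orbT.
  have [l0 [l1 [s0 s1]]] := @sh_ln R e e0.
  have := key (ln (1 + e)); rewrite (_ : 0 <= t0 + ln (1 + e) <= L); last first.
    by apply/andP; split; lra.
  move=> /(_ isT) H.
  have H2 : - K * shH (ln (1 + e)) <= D.
    rewrite -(ler_pM2l s0); nra.
  have : K * e * (2 * (K + 1)) <= K * (- D).
    rewrite -mulrA ler_pM2l // -ler_pdivlMr ?mulr_gt0 //; lra.
  nra.
- set e := Num.min (D / (2 * (K + 1))) t0.
  have e0 : 0 < e by rewrite lt_min divr_gt0 ?mulr_gt0 //; lra.
  have eD : e <= D / (2 * (K + 1)) by rewrite ge_min lexx.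
  have eL : e <= t0 by rewrite ge_min lexx orbT.
  have [l0 [l1 [s0 s1]]] := @sh_ln R e e0.
  have := key (- ln (1 + e)); rewrite (_ : 0 <= t0 + - ln (1 + e) <= L); last first.
    by apply/andP; split; lra.
  move=> /(_ isT); rewrite shN sqrrN => H.
  have H2 : D <= K * shH (ln (1 + e)).
    rewrite -(ler_pM2l s0); nra.
  have : K * e * (2 * (K + 1)) <= K * D.
    rewrite -mulrA ler_pM2l // -ler_pdivlMr ?mulr_gt0 //; lra.
  nra.
Qed.

Lemma mink_ge1 {R : realType} {d : nat} {u v : 'rV[R]_d.+1} :
  ptH u -> ptH v -> 1 <= - Defs.minkowski u v.
Proof.
rewrite /ptH !mink_E => -[uu u0] [vv v0].
have cs := CS_sum (vs u) (vs v).
rewrite -(eq_bigr _ (fun i _ => esym (expr2 (vs u i)))) in uu.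
rewrite -(eq_bigr _ (fun i _ => esym (expr2 (vs v i)))) in vv.
set P := \sum_(i < d) vs u i * vs v i in cs *.
set Su := \sum_(i < d) vs u i ^+ 2 in cs uu.
set Sv := \sum_(i < d) vs v i ^+ 2 in cs vv.
rewrite /vt in uu vv *.
have Su' : Su = u 0 ord0 ^+ 2 - 1 by lra.
have Sv' : Sv = v 0 ord0 ^+ 2 - 1 by lra.
rewrite Su' Sv' in cs.
have Su0 : 0 <= Su by rewrite sumr_ge0 // => i _; rewrite sqr_ge0.
have Sv0 : 0 <= Sv by rewrite sumr_ge0 // => i _; rewrite sqr_ge0.
have u1 : 1 <= u 0 ord0 by nra.
have v1 : 1 <= v 0 ord0 by nra.
have uv1 : 0 <= u 0 ord0 * v 0 ord0 - 1 by nra.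
have : P ^+ 2 <= (u 0 ord0 * v 0 ord0 - 1) ^+ 2.
  apply: (le_trans cs); have := sqr_ge0 (u 0 ord0 - v 0 ord0); nra.
move=> H; have : P <= u 0 ord0 * v 0 ord0 - 1 by nra.
rewrite /vt /=; lra.
Qed.

Lemma chH_distH {R : realType} {d : nat} {u v : 'rV[R]_d.+1} :
  ptH u -> ptH v -> 0 <= distH u v /\ chH (distH u v) = - Defs.minkowski u v.
Proof. move=> pu pv; rewrite /distH /arcosh; have [H1 H2] := @ch_arcosh R _ (mink_ge1 pu pv); split; [exact: H1 | exact: H2]. Qed.

Lemma chH_abs {R : realType} (x : R) : chH `|x| = chH x.
Proof. by case: (lerP 0 x) => x0; [rewrite ger0_norm | rewrite ltr0_norm // chN]. Qed.

Lemma distH_sym {R : realType} {d : nat} (u v : 'rV[R]_d.+1) : distH u v = distH v u.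
Proof. by rewrite /distH mink_sym. Qed.

Lemma hyp_id {R : realType} (t0 b : R) :
  shH (t0 + b) ^+ 2 + shH b ^+ 2 + shH t0 ^+ 2 - 2 * shH (t0 + b) * shH b * chH t0
  - 2 * shH (t0 + b) * shH t0 * chH b + 2 * shH b * shH t0 * chH (t0 + b) = 0.
Proof.
rewrite shD chD.
have h1 := chsh t0; have h2 := chsh b.
set S1 := shH t0 in h1 *; set C1 := chH t0 in h1 *; set S2 := shH b in h2 *; set C2 := chH b in h2 *.
have -> : (S1 * C2 + C1 * S2) ^+ 2 + S2 ^+ 2 + S1 ^+ 2 - 2 * (S1 * C2 + C1 * S2) * S2 * C1 -
  2 * (S1 * C2 + C1 * S2) * S1 * C2 + 2 * S2 * S1 * (C1 * C2 + S1 * S2) =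
  S1 ^+ 2 * (1 - (C2 ^+ 2 - S2 ^+ 2)) + S2 ^+ 2 * (1 - (C1 ^+ 2 - S1 ^+ 2)) by ring.
by rewrite h1 h2 subrr !mulr0 addr0.
Qed.

Lemma hyp_case {R : realType} {d : nat} (p q x y : 'rV[R]_d.+1) (g : R -> 'rV[R]_d.+1) (eps Delta : R) :
     ptH p -> ptH q -> ptH x ->
     shortest_segment (@ptH R d) (@distH R d) p q g ->
     closest_on_segment (@distH R d) p q g x y ->
     0 < eps <= 1 ->
     0 < Delta -> distH p q <= Delta ->
     distH x y <= Num.sqrt eps * Num.min (distH p y) (distH q y) ->
     distH p x + distH x q <= (1 + expR Delta * eps) * distH p q.
Proof.
move=> pp pq px [g0 [gL [gpt iso]]] [t0 [t0I [yE ymin]]] eI D0 LD H.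
have /andP[e0 e1] := eI.
have [L0 _] := chH_distH pp pq.
set L := distH p q in gL gpt iso t0I ymin L0 LD *.
have /andP[t00 t0L] := t0I.
have I0 : (0:R) <= 0 <= L by apply/andP; split.
have IL : 0 <= L <= L by apply/andP; split.
have Ha : distH p y = t0.
  by rewrite -g0 yE iso // sub0r normrN ger0_norm.
have Hb : distH q y = L - t0.
  have := iso L t0 IL t0I; rewrite gL -yE => ->; by rewrite ger0_norm // subr_ge0.
have py : ptH y by rewrite yE; apply: gpt.
have gram : forall s t, 0 <= s <= L -> 0 <= t <= L -> Defs.minkowski (g s) (g t) = - chH (s - t).
  move=> s t sI tI; have [_ E] := chH_distH (gpt s sI) (gpt t tI).
  by rewrite iso // chH_abs in E; rewrite E opprK.
rewrite Ha Hb in H.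
have se0 : 0 <= Num.sqrt eps := sqrtr_ge0 eps.
have [Hha Hhb] := min_split se0 H.
have [h0 xyc] := chH_distH px py.
set h := distH x y in H Hha Hhb ymin h0 xyc.
have mm : forall u : 'rV[R]_d.+1, ptH u -> Defs.minkowski u u = -1 by move=> u [].
case: (eqVneq h 0) => [h_0|hn0].
  have xy : x = y.
    apply/eqP; rewrite -subr_eq0; apply/eqP.
    have vv : Defs.minkowski (x - y) (x - y) = 0.
      rewrite quad2'; [|exact: mink_lin|exact: mink_sym].
      rewrite (mm x px) (mm y py) -[Defs.minkowski x y]opprK -xyc h_0 ch0; lra.
    have vw : Defs.minkowski (x - y) x = 0.
      rewrite B_sub; [|exact: mink_lin].
      rewrite (mm x px) mink_sym -[Defs.minkowski x y]opprK -xyc h_0 ch0; lra.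
    have [_ H0] := lorentz (x - y) x (mm x px) vw.
    exact: H0 vv.
  rewrite xy Ha distH_sym Hb.
  have : 0 <= expR Delta * eps * L by rewrite !mulr_ge0 // ?expR_ge0 // ltW.
  lra.
have hp : 0 < h by rewrite lt0r hn0.
have t0p : 0 < t0 by nra.
have t0L' : t0 < L by nra.
set A := - Defs.minkowski x y.
set F := - Defs.minkowski x p.
set f := fun t => - Defs.minkowski x (g t).
have A1 : 1 <= A := mink_ge1 px py.
have fge : forall t, 0 <= t <= L -> A <= f t.
  move=> t tI; rewrite /f /A.
  have [u0 E] := chH_distH px (gpt t tI).
  rewrite -E -xyc; apply: ch_le => //; exact: ymin.
have rel : forall t, 0 <= t <= L -> shH t * A - shH (t - t0) * F - shH t0 * f t = 0.
  move=> t tI.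
  have v0 : shH t *: y - shH (t - t0) *: p - shH t0 *: g t = 0.
    set v := shH t *: y - shH (t - t0) *: p - shH t0 *: g t.
    suff [vv vw] : Defs.minkowski v v = 0 /\ Defs.minkowski v y = 0.
      have [_ H0] := lorentz v y (mm y py) vw.
      exact: H0 vv.
    split.
      rewrite /v quad3; [|exact: mink_lin|exact: mink_sym].
      rewrite (mm y py) (mm p pp) (mm _ (gpt t tI)) yE !gram //.
      rewrite (_ : Defs.minkowski (g t0) p = - chH t0); last by rewrite -g0 gram // subr0.
      rewrite (_ : Defs.minkowski p (g t) = - chH t); last by rewrite -g0 gram // sub0r chN.
      rewrite (_ : t0 - t = - (t - t0)); last by rewrite opprB.
      rewrite chN.
      have := hyp_id t0 (t - t0); rewrite (addrC t0) subrK => E.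
      have H0 : forall a b : R, a = - b -> b = 0 -> a = 0 by move=> a b -> ->; rewrite oppr0.
      by apply: (H0 _ _ _ E); ring.
    rewrite /v mink_sym lin3; [|exact: mink_lin|exact: mink_sym].
    rewrite (mm y py).
    rewrite (_ : Defs.minkowski y p = - chH t0); last by rewrite yE -g0 gram // subr0.
    rewrite (_ : Defs.minkowski y (g t) = - chH (t - t0)); last by rewrite yE gram // -opprB chN.
    have -> : shH t = shH (t0 + (t - t0)) by rewrite addrC subrK.
    rewrite shD; ring.
  have := congr1 (Defs.minkowski x) v0.
  rewrite lin3; [|exact: mink_lin|exact: mink_sym].
  rewrite [Defs.minkowski x 0]mink_sym (B_0 mink_lin) => E.
  rewrite /A /F /f /= !mulrN; lra.
have FE := @perp_hyp R A F t0 L f t0p t0L' A1 fge rel.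
have st0 := sh_gt0 t0p.
have fL : f L = chH (L - t0) * A.
  have := rel L IL.
  rewrite FE (_ : L = (L - t0) + t0); last by rewrite subrK.
  rewrite addrK shD => E.
  apply: (@mulfI _ (shH t0)); first by rewrite gt_eqF.
  rewrite (subrK t0 L) in E *; lra.
have c1E : chH (distH p x) = chH t0 * chH h.
  have [_ ->] := chH_distH pp px; by rewrite mink_sym -/F FE /A -xyc.
have c2E : chH (distH x q) = chH (L - t0) * chH h.
  have [_ ->] := chH_distH px pq; by rewrite -gL -/(f L) fL /A -xyc.
have [c10 _] := chH_distH pp px.
have [c20 _] := chH_distH px pq.
have B1 := @hyp_bound R t0 h (distH p x) eps Delta t00 (le_trans t0L LD) h0 Hha eI c10 c1E.
have Lt0 : 0 <= L - t0 by lra.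
have LtL : L - t0 <= Delta by lra.
have B2 := @hyp_bound R (L - t0) h (distH x q) eps Delta Lt0 LtL h0 Hhb eI c20 c2E.
lra.
Qed.

Theorem mainTheorem4 (R : realType) (d : nat) (hd : (2 <= d)%N) :
  (* (i) Euclidean case *)
  (forall (p q x y : 'rV[R]_d) (g : R -> 'rV[R]_d) (eps : R),
     shortest_segment (@ptE R d) (@distE R d) p q g ->
     closest_on_segment (@distE R d) p q g x y ->
     0 < eps <= 1 ->
     distE x y <= Num.sqrt eps * Num.min (distE p y) (distE q y) ->
     distE p x + distE x q <= (1 + eps) * distE p q) /\
  (* (i) spherical case *)
  (forall (p q x y : 'rV[R]_d.+1) (g : R -> 'rV[R]_d.+1) (eps : R),
     ptS p -> ptS q -> ptS x ->
     shortest_segment (@ptS R d) (@distS R d) p q g ->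
     closest_on_segment (@distS R d) p q g x y ->
     0 < eps <= 1 ->
     distS x y <= Num.sqrt eps * Num.min (distS p y) (distS q y) ->
     distS p x + distS x q <= (1 + eps) * distS p q) /\
  (* (ii) hyperbolic case *)
  (forall (p q x y : 'rV[R]_d.+1) (g : R -> 'rV[R]_d.+1) (eps Delta : R),
     ptH p -> ptH q -> ptH x ->
     shortest_segment (@ptH R d) (@distH R d) p q g ->
     closest_on_segment (@distH R d) p q g x y ->
     0 < eps <= 1 ->
     0 < Delta -> distH p q <= Delta ->
     distH x y <= Num.sqrt eps * Num.min (distH p y) (distH q y) ->
     distH p x + distH x q <= (1 + expR Delta * eps) * distH p q).
Proof.
split; first by move=> *; apply: eucl_case; eauto.
split; first by move=> *; apply: sph_case; eauto.
by move=> *; apply: hyp_case; eauto.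
Qed.
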